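(* Assume the channel growth condition and the asymptotic quadratic-Lipschitz condition for every $\mathcal G^{(\ell)}$, $\ell=1,\dots,L$, and let $(\mathbf K^{(2,n)},\dots,\mathbf K^{(L+1,n)})$ come from the general covariance Markov chain. Then for every $\epsilon>0$ there exist compact sets $S_2\subset\mathcal S^+_{D_2},\dots,S_{L+1}\subset\mathcal S^+_{D_{L+1}}$ such that $$\limsup_{n\to\infty}\frac1n\log\mathbb P\big((\mathbf K^{(2,n)},\dots,\mathbf K^{(L+1,n)})\notin S_2\times\dots\times S_{L+1}\big)\le-\epsilon.$$
   Context: $\mathcal S^+_D$ denotes the symmetric positive semidefinite $D\times D$ real matrices, $\sqrt Q$ the positive semidefinite square root, $\|\cdot\|_2$ the Euclidean norm and $\|\cdot\|_F$ the Frobenius norm. General covariance Markov chain: fix $L\ge1$, positive integers $D_1,\dots,D_{L+1}$, measurable maps $\mathcal G^{(\ell)}:\mathbb R^{D_\ell}\to\mathcal S^+_{D_{\ell+1}}$ ($\ell=1,\dots,L$), a deterministic $\mathbf K^{(1)}\in\mathcal S^+_{D_1}$ and positive integers $C_\ell(n)$. For each $n\ge1$, $(\mathbf K^{(1,n)},\dots,\mathbf K^{(L+1,n)})$ is a Markov chain with $\mathbf K^{(1,n)}=\mathbf K^{(1)}$ and, for $\ell=1,\dots,L$, $\mathbb P\{\mathbf K^{(\ell+1,n)}\in B\mid\mathbf K^{(\ell,n)}=Q\}=\nu_{\ell+1,n}(B\mid Q):=\mathbb P\{\frac1{C_\ell(n)}\sum_{c=1}^{C_\ell(n)}\mathcal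 G^{(\ell)}(\sqrt QZ^{(\ell)}_c)\in B\}$ for Borel $B\subseteq\mathcal S^+_{D_{\ell+1}}$, $Q\in\mathcal S^+_{D_\ell}$, where $Z^{(\ell)}_c$, $c\ge1$, are i.i.d. $\mathcal N(\mathbf 0,\mathbf I_{D_\ell})$. Channel growth condition: $C_\ell(n)/n\to\alpha_\ell\in(0,\infty)$ for $\ell=1,\dots,L$. Asymptotic quadratic-Lipschitz condition: $\mathcal G^{(\ell)}$ is continuous and for every $\varepsilon>0$ there is $C_\varepsilon>0$ with $\|\mathcal G^{(\ell)}(z)-\mathcal G^{(\ell)}(z')\|_F\le C_\varepsilon[1+\|z-z'\|_2(\|z\|_2+\|z'\|_2)]+\varepsilon(\|z\|_2^2+\|z'\|_2^2)$ for all $z,z'$. *)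

(* Defs.v *)
From HB Require Import structures.
From mathcomp Require Import all_boot all_order all_algebra.
From mathcomp Require Import all_classical all_reals all_analysis.
Set Implicit Arguments.
Unset Strict Implicit.
Unset Printing Implicit Defensive.
Import Order.TTheory GRing.Theory Num.Theory.
Import numFieldTopology.Exports numFieldNormedType.Exports.
Local Open Scope classical_set_scope.
Local Open Scope ring_scope.

Section Defs.
Variable R : realType.

Definition sym_psd (D : nat) (Q : 'M[R]_D) : Prop :=
  Q^T = Q /\ forall v : 'cV[R]_D, 0 <= (v^T *m Q *m v) 0 0.

(* the positive semidefinite square root of Q (the unique symmetric psd M
   with M * M = Q; 0 if Q is not psd, a case that never arises below) *)
Definition psd_sqrt (D : nat) (Q : 'M[R]_D) : 'M[R]_D :=
  xget 0 [set M : 'M[R]_D | sym_psd M /\ M *m M = Q].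

Definition norm2 (D : nat) (z : 'cV[R]_D) : R :=
  Num.sqrt (\sum_(i < D) z i 0 ^+ 2).
Definition normF (m n : nat) (A : 'M[R]_(m, n)) : R :=
  Num.sqrt (\sum_(i < m) \sum_(j < n) A i j ^+ 2).

(* gauss_int N f = E[ f(Z) ] where Z = (Z_0, Z_1, ...) and Z_0,...,Z_{N-1}
   are i.i.d. N(0,1) (f is only meant to depend on the first N coordinates);
   computed as an iterated (Tonelli) integral against the N(0,1) law. *)
Fixpoint gauss_int (N : nat) (f : (nat -> R) -> \bar R) : \bar R :=
  match N with
  | 0 => f (fun _ => 0)
  | N'.+1 => (\int[normal_prob (0:R) 1]_x
               gauss_int N' (fun w => f (fun i => if i is i'.+1 then w i' else x)))%E
  end.

(* one step of the chain: given Q and the Gaussian coordinates w, where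
   Z_c = (w (c*D + i))_{i<D} for c < C, returns (1/C) sum_c G(sqrt(Q) Z_c) *)
Definition layer_map (D D' : nat) (G : 'cV[R]_D -> 'M[R]_D') (C : nat)
  (Q : 'M[R]_D) (w : nat -> R) : 'M[R]_D' :=
  (C%:R)^-1 *: \sum_(c < C) G (psd_sqrt Q *m \col_(i < D) w (c * D + i)%N).

(* prob_in Dim G C S k l Q = P( K^(l+1) in S (l+1), ..., K^(l+k) in S (l+k)
   | K^(l) = Q ) for the covariance Markov chain with transition kernels
   nu_{j+1}(. | Q) = law of (1/C j) sum_{c <= C j} G j (sqrt Q Z_c). *)
Fixpoint prob_in (Dim : nat -> nat)
  (G : forall l, 'cV[R]_(Dim l) -> 'M[R]_(Dim l.+1)) (C : nat -> nat)
  (S : forall l, set 'M[R]_(Dim l)) (k l : nat) (Q : 'M[R]_(Dim l)) : \bar R :=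
  match k with
  | 0 => 1%E
  | k'.+1 =>
      gauss_int (C l * Dim l)
        (fun w => let Q' := layer_map (G l) (C l) Q w in
                  ((\1_(S l.+1) Q')%:E * prob_in G C S k' Q')%E)
  end.

(* P( (K^(2,n),...,K^(L+1,n)) \notin S_2 x ... x S_{L+1} ) for the chain
   started at K^(1,n) = K1, with channel numbers C_l(n) = Cn l n. *)
Definition chain_exit_prob (Dim : nat -> nat)
  (G : forall l, 'cV[R]_(Dim l) -> 'M[R]_(Dim l.+1)) (Cn : nat -> nat -> nat)
  (L : nat) (K1 : 'M[R]_(Dim 1%N)) (S : forall l, set 'M[R]_(Dim l)) (n : nat)
  : \bar R :=
  (1 - prob_in G (fun l => Cn l n) S L K1)%E.

End Defs.

(* Main.v *)
Require Import Defs.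
From HB Require Import structures.
From mathcomp Require Import all_boot all_order all_algebra.
From mathcomp Require Import all_classical all_reals all_analysis.
From mathcomp Require Import measurable_realfun.
From mathcomp Require Import ring lra zify.
Import Order.TTheory GRing.Theory Num.Theory.
Import numFieldTopology.Exports numFieldNormedType.Exports.
Local Open Scope classical_set_scope.
Local Open Scope ring_scope.
Set Implicit Arguments.
Unset Strict Implicit.
Section Gauss.
Context (R : realType).

Definition phi (x : R) : R := expR (3 / 8 * x ^+ 2).

Lemma phi_pdf x : phi x * normal_pdf 0 1 x = 2 * normal_pdf 0 2 x.
Proof.
rewrite /normal_pdf oner_eq0 pnatr_eq0 /= /normal_peak /normal_fun /phi.
have p : Num.sqrt (2 ^+ 2 * pi *+ 2) = 2 * Num.sqrt (1 ^+ 2 * (pi : R) *+ 2).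
  rewrite expr1n mul1r -mulrnAr sqrtrM ?sqr_ge0 // sqrtr_sqr ger0_norm //.
rewrite p invfM.
have ab : expR (3 / 8 * x ^+ 2) * expR (- (x - 0) ^+ 2 / (1 ^+ 2 *+ 2)) =
   expR (- (x - 0) ^+ 2 / (2 ^+ 2 *+ 2)) :> R.
  by rewrite -expRD; congr expR; rewrite subr0 !mulr2n expr1n; field.
rewrite -ab.
have s0 : Num.sqrt (1 ^+ 2 * (pi : R) *+ 2) != 0.
  by rewrite gt_eqF // sqrtr_gt0 expr1n mul1r mulrn_wgt0 // pi_gt0.
by field.
Qed.

Lemma measurable_phi : measurable_fun setT phi.
Proof. apply: measurableT_comp => //. by apply: measurable_funM. Qed.

Lemma phi_ge0 x : 0 <= phi x. Proof. exact: expR_ge0. Qed.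

Local Open Scope ereal_scope.

Lemma le_int_any (f g : R -> \bar R) : (forall x, g x <= f x) ->
  \int[normal_prob 0 1]_x g x <= \int[normal_prob 0 1]_x f x.
Proof.
move=> gf; rewrite /integral !patch_setT.
apply: leeB; apply: le_ereal_sup => _ [h hle <-]; exists h => //= x.
- apply: le_trans (hle x) _. by apply: (@funepos_le _ _ setT) => [y _|]; [exact: gf|exact: in_setT].
- apply: le_trans (hle x) _. by apply: (@funeneg_le _ _ setT) => [y _|]; [exact: gf|exact: in_setT].
Qed.

Lemma integral_normal01 (f : R -> \bar R) : (forall x, 0 <= f x) -> measurable_fun setT f ->
  \int[normal_prob 0 1]_x f x = \int[lebesgue_measure]_x (f x * (normal_pdf 0 1 x)%:E).
Proof.
move=> f0 mf.
have dom := @normal_prob_dominates R 0 1.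
rewrite -(Radon_Nikodym_SigmaFinite.change_of_variables dom) //.
have iRN := Radon_Nikodym_SigmaFinite.f_integrable dom.
have mRN := measurable_int _ iRN.
apply: ae_eq_integral => //.
- exact: emeasurable_funM.
- apply: emeasurable_funM => //. apply/measurable_EFinP; exact: measurable_normal_pdf.
- apply: ae_eqe_mul2l. apply: integral_ae_eq => //.
  + apply/measurable_EFinP; exact: measurable_normal_pdf.
  + move=> E _ mE. by rewrite -Radon_Nikodym_SigmaFinite.f_integral.
Qed.

Lemma int_phi : \int[normal_prob 0 1]_x (phi x)%:E = 2%:E.
Proof.
rewrite integral_normal01 //; last first.
  - by apply/measurable_EFinP; exact: measurable_phi.
  - by move=> x; rewrite lee_fin phi_ge0.
under eq_integral do rewrite -EFinM phi_pdf EFinM.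
rewrite integralZl //=; last exact: integrable_normal_pdf.
by rewrite integral_normal_pdf mule1.
Qed.

Lemma integrable_phi : (normal_prob 0 1).-integrable setT (EFin \o phi).
Proof.
apply/integrableP; split; first by apply/measurable_EFinP; exact: measurable_phi.
under eq_integral do rewrite /= ger0_norm ?phi_ge0 //.
by rewrite int_phi ltry.
Qed.

Lemma int_affine (a b : R) :
  \int[normal_prob 0 1]_x (a - b * phi x)%:E = (a - b * 2)%:E.
Proof.
under eq_integral do rewrite EFinB.
rewrite integralB_EFin //; last first.
- have H := integrableZl measurableT b (@integrable_phi).
  refine (eq_integrable measurableT _ _ _ H). by move=> x _; rewrite /= EFinM.
- exact: (finite_measure_integrable_cst (normal_prob 0 1) a measurableT).
rewrite integral_cst // [X in a%:E * X](_ : _ = 1) ?mule1; last exact: probability_setT.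
under eq_integral do rewrite EFinM.
by rewrite integralZl //; [rewrite int_phi -EFinM | exact: integrable_phi].
Qed.


Lemma gauss_int_mono N (f g : (nat -> R) -> \bar R) :
  (forall w, g w <= f w) -> gauss_int N g <= gauss_int N f.
Proof.
elim: N f g => [|N IH] f g H /=; first exact: H.
apply: le_int_any => x; apply: IH => w; exact: H.
Qed.

Lemma gauss_int_prod N (a c : R) :
  gauss_int N (fun w => (a - c * \prod_(k < N) phi (w k))%:E) = (a - c * 2 ^+ N)%:E.
Proof.
elim: N a c => [|N IH] a c /=; first by rewrite big_ord0 expr0.
transitivity (\int[normal_prob 0 1]_x (a - (c * 2 ^+ N) * phi x)%:E); last first.
  by rewrite int_affine exprS; congr (_ - _)%:E; ring.
apply: eq_integral => x _.
have -> : (a - c * 2 ^+ N * phi x = a - (c * phi x) * 2 ^+ N)%R by ring.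
rewrite -(IH a (c * phi x)%R); congr gauss_int; apply: funext => w.
rewrite big_ord_recl /=; congr (_ - _)%:E; ring.
Qed.

End Gauss.

Section Mx.
Context (R : realType).

Definition sq2 (D : nat) (z : 'cV[R]_D) : R := \sum_(i < D) z i 0 ^+ 2.

Lemma sq2_ge0 D (z : 'cV[R]_D) : 0 <= sq2 z.
Proof. by apply: sumr_ge0 => i _; exact: sqr_ge0. Qed.



Lemma sum_reindex (D C : nat) (f : nat -> R) :
  \sum_(k < C * D) f k = \sum_(c < C) \sum_(i < D) f (c * D + i)%N.
Proof.
elim: C => [|C IH]; first by rewrite mul0n !big_ord0.
rewrite big_ord_recr /= -IH -!(big_mkord xpredT (fun k => f k)).
rewrite mulSnr (big_cat_nat _ (leq_addr _ _)) //=; congr (_ + _).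
rewrite -{1}[(C * D)%N]add0n big_addn addKn big_mkord.
by apply: eq_bigr => i _; rewrite addnC.
Qed.

Lemma entry_le_normF m n (A : 'M[R]_(m, n)) i j : `|A i j| <= normF A.
Proof.
rewrite /normF -sqrtr_sqr; apply: ler_wsqrtr.
rewrite (bigD1 i) //= (bigD1 j) //= -addrA lerDl.
apply: addr_ge0; first by apply: sumr_ge0 => k _; exact: sqr_ge0.
by apply: sumr_ge0 => k _; apply: sumr_ge0 => l _; exact: sqr_ge0.
Qed.

Lemma norm2_sq D (z : 'cV[R]_D) : norm2 z ^+ 2 = sq2 z.
Proof. by rewrite /norm2 sqr_sqrtr // sq2_ge0. Qed.

Lemma norm20 D : norm2 (0 : 'cV[R]_D) = 0.
Proof. by rewrite /norm2 big1 ?sqrtr0 // => i _; rewrite mxE expr0n. Qed.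

Lemma norm2_ge0 D (z : 'cV[R]_D) : 0 <= norm2 z.
Proof. exact: sqrtr_ge0. Qed.


Lemma sym_psd0 D : sym_psd (0 : 'M[R]_D).
Proof. split; first by rewrite trmx0. by move=> v; rewrite mulmx0 mul0mx mxE. Qed.

Lemma sym_psdD D (A B : 'M[R]_D) : sym_psd A -> sym_psd B -> sym_psd (A + B).
Proof.
move=> [tA qA] [tB qB]; split; first by rewrite linearD /= tA tB.
by move=> v; rewrite mulmxDr mulmxDl mxE addr_ge0.
Qed.

Lemma sym_psdZ D a (A : 'M[R]_D) : 0 <= a -> sym_psd A -> sym_psd (a *: A).
Proof.
move=> a0 [tA qA]; split; first by rewrite linearZ /= tA.
move=> v; rewrite -scalemxAr -scalemxAl; set X := (_ *m _ *m _). have -> : (a *: X) 0 0 = a * X 0 0 by rewrite mxE. by apply: mulr_ge0 => //; exact: qA.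
Qed.

Lemma sym_psd_sum D (I : Type) (r : seq I) (F : I -> 'M[R]_D) :
  (forall i, sym_psd (F i)) -> sym_psd (\sum_(i <- r) F i).
Proof.
move=> H; elim: r => [|x r IH]; first by rewrite big_nil; exact: sym_psd0.
by rewrite big_cons; apply: sym_psdD.
Qed.


Lemma quad_le D (Q : 'M[R]_D) M (z : 'cV[R]_D) : 0 <= M ->
  (forall i j, `|Q i j| <= M) -> (z^T *m Q *m z) 0 0 <= M * D%:R * sq2 z.
Proof.
move=> M0 HQ.
rewrite mxE.
under eq_bigr do rewrite mxE big_distrl /=.
apply: (@le_trans _ _ (\sum_(k < D) \sum_(j < D) (M / 2 * (z j 0 ^+ 2 + z k 0 ^+ 2)))).
  apply: ler_sum => k _; apply: ler_sum => j _; rewrite mxE.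
  set a := z j 0; set b := z k 0; set q := Q j k.
  apply: le_trans (ler_norm _) _; rewrite !normrM.
  apply: (@le_trans _ _ (`|a| * M * `|b|)).
    by apply: ler_wpM2r; [exact: normr_ge0| apply: ler_wpM2l; [exact: normr_ge0|exact: HQ]].
  rewrite -(real_normK (num_real a)) -(real_normK (num_real b)).
  have := mulr_ge0 M0 (sqr_ge0 (`|a| - `|b|)); nra.
have e : forall k : 'I_D, \sum_(j < D) (M / 2 * (z j 0 ^+ 2 + z k 0 ^+ 2)) =
    M / 2 * (sq2 z + D%:R * z k 0 ^+ 2).
  move=> k; rewrite -mulr_sumr big_split /= sumr_const card_ord mulr_natl //.
under eq_bigr do rewrite e.
rewrite -mulr_sumr big_split /= -mulr_sumr sumr_const card_ord -/(sq2 z).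
rewrite -[sq2 z *+ D]mulr_natr le_eqVlt; apply/orP; left; apply/eqP; field.
by [].
Qed.

Lemma sqrt_bound D (Q : 'M[R]_D) M (z : 'cV[R]_D) : 0 <= M ->
  (forall i j, `|Q i j| <= M) -> sq2 (psd_sqrt Q *m z) <= M * D%:R * sq2 z.
Proof.
move=> M0 HQ; rewrite /psd_sqrt; case: xgetP => [A _ [[tA _] AA] | _].
  have -> : sq2 (A *m z) = ((A *m z)^T *m (A *m z)) 0 0.
    by rewrite /sq2 [RHS]mxE; apply: eq_bigr => i _; rewrite expr2 !mxE.
  rewrite trmx_mul tA mulmxA -(mulmxA z^T) AA.
  exact: quad_le.
rewrite mul0mx /sq2 big1 ?mulr_ge0 ?sq2_ge0 //.
by move=> i _; rewrite mxE expr0n.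
Qed.


Lemma layer_good D D' (G : 'cV[R]_D -> 'M[R]_D') (C : nat) (Q : 'M[R]_D)
    (w : nat -> R) (K B M t : R) :
  (0 < C)%N -> 0 <= B -> 0 <= M ->
  (forall z, sym_psd (G z)) ->
  (forall z i j, `|G z i j| <= K + B * sq2 z) ->
  (forall i j, `|Q i j| <= M) ->
  \sum_(k < C * D) w k ^+ 2 <= t * (C * D)%:R ->
  sym_psd (layer_map G C Q w) /\
  forall i j, `|layer_map G C Q w i j| <= K + B * (M * D%:R) * (t * D%:R).
Proof.
move=> C0 B0 M0 Gpsd HG HQ Hw; split.
  apply: sym_psdZ; first by rewrite invr_ge0 ler0n.
  by apply: sym_psd_sum.
move=> i j; rewrite /layer_map mxE summxE normrM ger0_norm ?invr_ge0 ?ler0n //.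
set col := fun c : 'I_C => \col_(i < D) w (c * D + i)%N.
apply: (@le_trans _ _ (C%:R^-1 * \sum_(c < C) (K + B * (M * D%:R * sq2 (col c))))).
  rewrite ler_wpM2l ?invr_ge0 ?ler0n //.
  apply: le_trans (ler_norm_sum _ _ _) _; apply: ler_sum => c _.
  apply: le_trans (HG _ i j) _; rewrite lerD2l ler_wpM2l //.
  exact: sqrt_bound.
rewrite big_split /= sumr_const card_ord -!mulr_sumr.
have -> : \sum_(c < C) sq2 (col c) = \sum_(k < C * D) w k ^+ 2.
  rewrite (sum_reindex D C (fun k => w k ^+ 2)); apply: eq_bigr => c _; apply: eq_bigr => k _.
  by rewrite mxE.
have Cpos : (0 : R) < C%:R by rewrite ltr0n.
set S := \sum_(k < C * D) w k ^+ 2.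
have -> : C%:R^-1 * (K *+ C + B * (M * D%:R * S)) = K + C%:R^-1 * (B * (M * D%:R * S)).
  by rewrite -[K *+ C]mulr_natr; field; rewrite gt_eqF.
rewrite lerD2l; rewrite natrM in Hw.
apply: (@le_trans _ _ (C%:R^-1 * (B * (M * D%:R * (t * (C%:R * D%:R)))))).
  rewrite ler_wpM2l ?invr_ge0 ?ler0n // ler_wpM2l // ler_wpM2l ?mulr_ge0 ?ler0n //.
rewrite le_eqVlt; apply/orP; left; apply/eqP; field.
by rewrite gt_eqF.
Qed.

End Mx.

Section Chain.
Context (R : realType).

Lemma G_bound D D' (G : 'cV[R]_D -> 'M[R]_D') (Ce : R) :
  (forall z z' : 'cV[R]_D, normF (G z - G z') <=
     Ce * (1 + norm2 (z - z') * (norm2 z + norm2 z')) + 1 * (norm2 z ^+ 2 + norm2 z' ^+ 2)) ->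
  forall z i j, `|G z i j| <= (Ce + normF (G 0)) + (Ce + 1) * sq2 z.
Proof.
move=> H z i j; have := H z 0.
rewrite subr0 norm20 addr0 expr0n /= addr0 mul1r -expr2 norm2_sq => Hz.
have -> : G z i j = (G z - G 0) i j + G 0 i j by rewrite !mxE subrK.
apply: le_trans (ler_normD _ _) _.
apply: le_trans (lerD (entry_le_normF _ _ _) (entry_le_normF _ _ _)) _.
apply: le_trans (lerD Hz (lexx _)) _.
rewrite le_eqVlt; apply/orP; left; apply/eqP; ring.
Qed.

Local Open Scope ereal_scope.

Lemma prob_in_ge0 (Dim : nat -> nat) (G : forall l, 'cV[R]_(Dim l) -> 'M[R]_(Dim l.+1))
  (Cf : nat -> nat) (S : forall l, set 'M[R]_(Dim l)) k l (Q : 'M[R]_(Dim l)) :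
  0 <= prob_in G Cf S k Q.
Proof.
elim: k l Q => [|k IH] l Q /=; first exact: lee01.
apply: (@le_trans _ _ (gauss_int (Cf l * Dim l)
   (fun w => (0 - 0 * \prod_(k < Cf l * Dim l) phi (w k))%:E))).
  by rewrite gauss_int_prod mul0r subr0.
apply: gauss_int_mono => w; rewrite mul0r subr0.
by apply: mule_ge0; [rewrite lee_fin indicE ler0n | exact: IH].
Qed.

Definition delta (t : R) (N : nat) : R :=
  (expR (- (3 / 8) * (t * N%:R)) * 2 ^+ N)%R.

Lemma delta_ge0 t N : (0 <= delta t N)%R.
Proof. by rewrite /delta mulr_ge0 ?expR_ge0 ?exprn_ge0. Qed.

Lemma prob_in_lb (L : nat) (Dim : nat -> nat)
  (G : forall l, 'cV[R]_(Dim l) -> 'M[R]_(Dim l.+1))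
  (Cf : nat -> nat) (S : forall l, set 'M[R]_(Dim l)) (t : nat -> R) :
  (forall l, (1 <= l <= L)%N -> forall Q, S l Q -> forall w : nat -> R,
     (\sum_(k < Cf l * Dim l) w k ^+ 2 <= t l * (Cf l * Dim l)%:R)%R ->
     S l.+1 (layer_map (G l) (Cf l) Q w)) ->
  forall k l Q, (1 <= l)%N -> (l + k <= L.+1)%N -> S l Q ->
  (1 - \sum_(j <- iota l k) delta (t j) (Cf j * Dim j))%:E <= prob_in G Cf S k Q.
Proof.
move=> Hstep; elim=> [|k IH] l Q hl hk SQ /=; first by rewrite big_nil subr0.
rewrite big_cons.
set Δ := (\sum_(j <- iota l.+1 k) delta (t j) (Cf j * Dim j))%R.
set N := (Cf l * Dim l)%N.
set c := expR (- (3 / 8) * (t l * N%:R)).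
have HΔ : (0 <= Δ)%R by apply: sumr_ge0 => j _; exact: delta_ge0.
have -> : (1 - (delta (t l) N + Δ))%R = (1 - Δ - c * 2 ^+ N)%R.
  by rewrite /delta -/c; ring.
rewrite -gauss_int_prod; apply: gauss_int_mono => w.
have Pge0 : (0 <= c * \prod_(k0 < N) phi (w k0))%R.
  by rewrite mulr_ge0 ?expR_ge0 // prodr_ge0 // => i _; exact: phi_ge0.
have [good|bad] := leP (\sum_(k0 < N) w k0 ^+ 2)%R (t l * N%:R)%R.
  have lL : (l <= L)%N by move: hk; rewrite addnS ltnS => /(leq_trans (leq_addr _ _)).
  have S' := Hstep l (introT andP (conj hl lL)) Q SQ w good.
  rewrite indicE mem_set // mul1e.
  apply: le_trans (IH _ _ _ _ S'); first by rewrite lee_fin lerBlDr lerDl.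
  by []. by rewrite addSnnS.
apply: (@le_trans _ _ 0); last first.
  by apply: mule_ge0; [rewrite lee_fin indicE ler0n | exact: prob_in_ge0].
rewrite lee_fin subr_le0.
have -> : (c * \prod_(k0 < N) phi (w k0) =
    expR (- (3 / 8) * (t l * N%:R) + \sum_(k0 < N) 3 / 8 * w k0 ^+ 2))%R.
  by rewrite expRD expR_sum.
apply: (@le_trans _ _ 1%R); first by rewrite lerBlDr lerDl.
apply: ltW; rewrite expR_gt1 -mulr_sumr.
move: bad; lra.
Qed.

End Chain.

Section Compact.
Context (R : realType).

Lemma cont_sum (T : topologicalType) (I : Type) (r : seq I) (F : I -> T -> R) :
  (forall i, continuous (F i)) -> continuous (fun x => \sum_(i <- r) F i x).
Proof.
move=> H; elim: r => [|a r IH].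
  under eq_fun do rewrite big_nil. exact: cst_continuous.
under eq_fun do rewrite big_cons.
move=> x; exact: (@continuousD _ _ _ (F a) (fun x => \sum_(i <- r) F i x) x (H a x) (IH x)).
Qed.

Lemma cont_coord m n (c : R) i j : continuous (fun Q : 'M[R]_(m, n) => c * Q i j).
Proof.
move=> x; apply: (@continuousM _ _ (cst c) (fun Q : 'M[R]_(m, n) => Q i j) x).
  exact: cst_continuous.
exact: coord_continuous.
Qed.

Lemma closed_forall (T : topologicalType) (I : Type) (A : I -> set T) :
  (forall i, closed (A i)) -> closed [set x | forall i, A i x].
Proof.
move=> H; have := @closed_bigI _ I setT A (fun i _ => H i).
by rewrite (_ : \bigcap_(i in setT) A i = [set x | forall i, A i x]) //;
  apply/seteqP; split => x /= Hx i; [exact: Hx | move=> _; exact: Hx].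
Qed.

Lemma closed_le_fun (T : topologicalType) (f : T -> R) (M : R) :
  continuous f -> closed [set x | f x <= M].
Proof.
move=> fc; apply: (@preimage_closed _ _ f [set y | y <= M]); last exact: closed_le.
by move=> x _; exact: fc.
Qed.

Lemma closed_ge_fun (T : topologicalType) (f : T -> R) (M : R) :
  continuous f -> closed [set x | M <= f x].
Proof.
move=> fc; apply: (@preimage_closed _ _ f [set y | M <= y]); last exact: closed_ge.
by move=> x _; exact: fc.
Qed.

Lemma closed_eq_fun (T : topologicalType) (f : T -> R) (M : R) :
  continuous f -> closed [set x | f x = M].
Proof.
move=> fc; apply: (@preimage_closed _ _ f [set y | y = M]); last exact: closed_eq.
by move=> x _; exact: fc.
Qed.

Lemma quad_expand D (Q : 'M[R]_D) (v : 'cV[R]_D) :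
  (v^T *m Q *m v) 0 0 = \sum_(k < D) \sum_(j < D) (v j 0 * v k 0) * Q j k.
Proof.
rewrite mxE; apply: eq_bigr => k _; rewrite mxE big_distrl /=.
by apply: eq_bigr => j _; rewrite mxE; ring.
Qed.

Lemma Sset_closed D (M : R) :
  closed [set Q : 'M[R]_D | sym_psd Q /\ forall i j, `|Q i j| <= M].
Proof.
have -> : [set Q : 'M[R]_D | sym_psd Q /\ forall i j, `|Q i j| <= M] =
  [set Q | forall ij : 'I_D * 'I_D, 1 * Q ij.2 ij.1 + (-1) * Q ij.1 ij.2 = 0] `&`
  [set Q | forall v : 'cV[R]_D, 0 <= \sum_(k < D) \sum_(j < D) (v j 0 * v k 0) * Q j k] `&`
  [set Q | forall ij : 'I_D * 'I_D, `|Q ij.1 ij.2| <= M].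
  apply/seteqP; split => Q /=.
    move=> [[tQ qQ] bQ]; split; [split|].
    - move=> [i j] /=; rewrite -[in Q j i]tQ mxE; ring.
    - by move=> v; rewrite -quad_expand.
    - by move=> [i j]; exact: bQ.
  move=> [[tQ qQ] bQ]; split; [split|].
  - apply/matrixP => i j; rewrite mxE; have := tQ (j, i) => /=.
    by move=> /eqP; rewrite mulN1r mul1r subr_eq0 => /eqP.
  - by move=> v; rewrite quad_expand.
  - by move=> i j; exact: (bQ (i, j)).
apply: closedI; [apply: closedI|].
- apply: closed_forall => -[i j]; apply: closed_eq_fun => x.
  apply: (@continuousD _ _ _ (fun Q : 'M[R]_D => 1 * Q j i) (fun Q : 'M[R]_D => (-1) * Q i j)).
  + exact: cont_coord.
  + exact: cont_coord.
- apply: closed_forall => v; apply: closed_ge_fun.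
  apply: cont_sum => k; apply: cont_sum => j; exact: cont_coord.
- apply: closed_forall => -[i j]; apply: closed_le_fun => x.
  apply: (@continuous_comp _ _ _ (fun Q : 'M[R]_D => Q i j) (@Num.norm _ R)).
    exact: coord_continuous.
  exact: norm_continuous.
Qed.

End Compact.

Section Compact2.
Context (R : realType).

Lemma vec_mx_continuous m n : continuous (@vec_mx R m n).
Proof.
move=> v B /nbhs_ballP [e e0 HB]; apply/nbhs_ballP; exists e => // y [_ H].
apply: HB; split => // i j.
by rewrite !mxE; exact: H.
Qed.

Lemma Sset_compact D (M : R) :
  compact [set Q : 'M[R]_D | sym_psd Q /\ forall i j, `|Q i j| <= M].
Proof.
apply: (@subclosed_compact _ _
  (vec_mx @` [set v : 'rV[R]_(D * D) | forall k, `[- M, M]%classic (v ord0 k)])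
  (@Sset_closed R D M)).
  apply: continuous_compact.
    apply: continuous_subspaceT; exact: vec_mx_continuous.
  apply: (@rV_compact _ _ (fun=> `[- M, M]%classic)) => _.
  exact: segment_compact.
move=> Q [_ bQ]; exists (mxvec Q); last exact: mxvecK.
move=> k; case/mxvec_indexP: k => i j.
by rewrite mxvecE /= in_itv /= -ler_norml.
Qed.



End Compact2.

Section Final.
Context (R : realType).
Lemma ev_ratio (f : nat -> nat) (a : R) : (0 < a)%R ->
  (fun n : nat => ((f n)%:R / n%:R : R)) @ \oo --> a ->
  exists N, forall n, (N <= n)%N -> a / 2 * n%:R <= (f n)%:R.
Proof.
move=> a0 /cvgr_gt /(_ (a / 2)) []; first by rewrite ltr_pdivrMr // ltr_pMr // ltr1n.
move=> N _ HN; exists N.+1 => n hn.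
have n0 : (0 < n%:R :> R)%R by rewrite ltr0n (leq_trans _ hn).
have := HN n (leq_trans (leqnSn _) hn) => /= /ltW.
by rewrite ler_pdivlMr.
Qed.

Local Open Scope ereal_scope.

Lemma limn_esup_ev (u : nat -> \bar R) (b : \bar R) (N : nat) :
  (forall n, (N <= n)%N -> u n <= b) -> limn_esup u <= b.
Proof.
move=> H; rewrite /limn_esup /limf_esup.
apply: (@le_trans _ _ (ereal_sup (u @` [set n | (N <= n)%N]))).
  apply: ereal_inf_lbound; exists [set n | (N <= n)%N] => //.
  by exists N.
by apply: ge_ereal_sup => _ [n hn <-]; exact: H.
Qed.

Lemma lne_le (x : \bar R) (y : R) : (0 < y)%R -> x <= y%:E -> lne x <= (ln y)%:E.
Proof.
move=> y0; case: x => [r| |] //= hr; last exact: leNye.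
case: ifPn => [_|]; first exact: leNye.
rewrite -ltNge => r0.
by rewrite lee_fin ler_ln ?posrE // -lee_fin.
Qed.



End Final.

Section Delta.
Context (R : realType).

Lemma two_pow_le (N : nat) : (2 : R) ^+ N <= expR N%:R.
Proof.
rewrite -[N%:R]mulr1 expRM_natl.
apply: lerXn2r; rewrite ?nnegrE ?expR_ge0 //.
by have := expR_ge1Dx (1 : R); rewrite (_ : 1 + 1 = 2 :> R) //.
Qed.

Lemma delta_small (t r a eps : R) (C D n : nat) :
  0 < a -> 0 <= eps -> (1 <= D)%N -> t = 8 / 3 * (r + 1) ->
  2 * (eps + 1) / a <= r -> a / 2 * n%:R <= C%:R ->
  delta t (C * D) <= expR (- (eps + 1) * n%:R).
Proof.
move=> a0 e0 D1 -> hr hC.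
rewrite /delta; set N := (C * D)%N.
apply: (@le_trans _ _ (expR (- (3 / 8) * (8 / 3 * (r + 1) * N%:R)) * expR N%:R)).
  by rewrite ler_wpM2l ?expR_ge0 // two_pow_le.
rewrite -expRD ler_expR.
have hN : C%:R <= N%:R :> R by rewrite ler_nat /N leq_pmulr.
have r0 : 0 <= r.
  apply: le_trans hr; apply: divr_ge0; last exact: ltW.
  by apply: mulr_ge0 => //; apply: addr_ge0.
have h1 : (eps + 1) * n%:R <= r * N%:R.
  apply: (@le_trans _ _ (2 * (eps + 1) / a * (a / 2 * n%:R))).
    by rewrite le_eqVlt; apply/orP; left; apply/eqP; field; rewrite gt_eqF.
  apply: ler_pM => //.
  - by apply: divr_ge0; [apply: mulr_ge0 => //; apply: addr_ge0 | exact: ltW].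
  - by apply: mulr_ge0 => //; apply: divr_ge0 => //; exact: ltW.
  - exact: le_trans hC hN.
have -> : - (3 / 8) * (8 / 3 * (r + 1) * N%:R) + N%:R = - (r * N%:R) :> R by field.
by rewrite mulNr lerN2.
Qed.

End Delta.

Unset Implicit Arguments.
Set Strict Implicit.

Theorem mainTheorem19 (R : realType) (L : nat) (Dim : nat -> nat)
  (G : forall l, 'cV[R]_(Dim l) -> 'M[R]_(Dim l.+1))
  (K1 : 'M[R]_(Dim 1%N)) (Cn : nat -> nat -> nat) (alpha : nat -> R) :
  (1 <= L)%N ->
  (forall l, (1 <= l <= L.+1)%N -> (0 < Dim l)%N) ->
  (forall l, (1 <= l <= L)%N -> forall z, sym_psd (G l z)) ->
  sym_psd K1 ->
  (forall l n, (1 <= l <= L)%N -> (0 < Cn l n)%N) ->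
  (* channel growth condition *)
  (forall l, (1 <= l <= L)%N ->
     0 < alpha l /\ (fun n : nat => ((Cn l n)%:R / n%:R : R)) @ \oo --> alpha l) ->
  (* asymptotic quadratic-Lipschitz condition *)
  (forall l, (1 <= l <= L)%N -> continuous (G l)) ->
  (forall l, (1 <= l <= L)%N -> forall e : R, 0 < e ->
     exists Ce : R, 0 < Ce /\
       forall z z' : 'cV[R]_(Dim l),
         normF (G l z - G l z') <=
           Ce * (1 + norm2 (z - z') * (norm2 z + norm2 z'))
           + e * (norm2 z ^+ 2 + norm2 z' ^+ 2)) ->
  forall eps : R, 0 < eps ->
  exists S : forall l, set 'M[R]_(Dim l),
    (forall l, (2 <= l <= L.+1)%N ->
       compact (S l) /\ S l `<=` [set Q | sym_psd Q]) /\
    (limn_esup (fun n : nat =>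
        ((n%:R)^-1)%:E * lne (chain_exit_prob G Cn L K1 S n)) <= - eps%:E)%E.
Proof.
move=> hL hDim hGpsd hK1 hCpos hgrowth hcont hlip eps eps0.
have [Cf HCf] : {Cf : nat -> R & forall l, (1 <= l <= L)%N -> 0 < Cf l /\
    forall z z' : 'cV[R]_(Dim l), normF (G l z - G l z') <=
      Cf l * (1 + norm2 (z - z') * (norm2 z + norm2 z')) + 1 * (norm2 z ^+ 2 + norm2 z' ^+ 2)}.
  apply: (@choice nat R (fun l c => (1 <= l <= L)%N -> 0 < c /\
    forall z z' : 'cV[R]_(Dim l), normF (G l z - G l z') <=
      c * (1 + norm2 (z - z') * (norm2 z + norm2 z')) + 1 * (norm2 z ^+ 2 + norm2 z' ^+ 2))).
  move=> l; case: (boolP (1 <= l <= L)%N) => hl.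
    by have [c hc] := hlip l hl 1 ltr01; exists c.
  by exists 0 => h; case/negP: hl.
pose Kc l := Cf l + normF (G l 0).
pose Bc l := Cf l + 1.
pose r l := 2 * (eps + 1) / alpha l + 1.
pose t l := 8 / 3 * (r l + 1).
pose M := fix Mf (l : nat) : R := match l with
  | 0 => 0
  | l'.+1 => if l' is 0 then normF K1
             else Kc l' + Bc l' * (Mf l' * (Dim l')%:R) * (t l' * (Dim l')%:R) end.
have MS : forall l, (1 <= l)%N ->
    M l.+1 = Kc l + Bc l * (M l * (Dim l)%:R) * (t l * (Dim l)%:R).
  by case.
have tge0 : forall l, (1 <= l <= L)%N -> 0 <= t l.
  move=> l hl; have [a0 _] := hgrowth l hl.
  rewrite /t /r; apply: mulr_ge0 => //; apply: addr_ge0 => //; apply: addr_ge0 => //.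
  apply: divr_ge0; last exact: ltW.
  by apply: mulr_ge0 => //; apply: addr_ge0 => //; exact: ltW.
have M0 : forall l, (1 <= l <= L.+1)%N -> 0 <= M l.
  elim => [|l IH] //; case: l IH => [|l] IH hl; first exact: sqrtr_ge0.
  have hl' : (1 <= l.+1 <= L)%N by move: hl; rewrite ltnS.
  have [c0 _] := HCf _ hl'.
  rewrite MS //; apply: addr_ge0.
    by apply: addr_ge0; [exact: ltW | exact: sqrtr_ge0].
  apply: mulr_ge0; last by apply: mulr_ge0 => //; exact: tge0.
  apply: mulr_ge0; first by apply: addr_ge0 => //; exact: ltW.
  apply: mulr_ge0 => //; apply: IH.
  by move: hl'; lia.
pose S l : set 'M[R]_(Dim l) := [set Q | sym_psd Q /\ forall i j, `|Q i j| <= M l].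
exists S; split.
  move=> l /andP[hl2 hl]; split; first exact: Sset_compact.
  by move=> Q [].
have Hlb : forall n, ((1 - \sum_(j <- iota 1 L) delta (t j) (Cn j n * Dim j))%:E <=
    prob_in G (fun l => Cn l n) S L K1)%E.
  move=> n; apply: (@prob_in_lb R L Dim G (fun l => Cn l n) S t) => //; last first.
    by split; [exact: hK1 | move=> i j; exact: entry_le_normF].
  move=> l hl Q [Qpsd QM] w hw.
  have [c0 hc] := HCf l hl.
  have hl1 : (1 <= l <= L.+1)%N by move: hl => /andP[-> h]; rewrite /= leqW.
  have [Hp Hb] := @layer_good R _ _ (G l) (Cn l n) Q w (Kc l) (Bc l) (M l) (t l)
    (hCpos l n hl) (addr_ge0 (ltW c0) ler01) (M0 l hl1) (hGpsd l hl) (G_bound hc) QM hw.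
  split => // i j; rewrite MS; first exact: Hb.
  by case/andP: hl.
have Hexit : forall n, (chain_exit_prob G Cn L K1 S n <=
    (\sum_(j <- iota 1 L) delta (t j) (Cn j n * Dim j))%:E)%E.
  move=> n; rewrite /chain_exit_prob.
  apply: le_trans (leeB (lexx 1%E) (Hlb n)) _.
  by rewrite -EFinB lee_fin subKr.
have [Nf HNf] : {Nf : nat -> nat & forall l, (1 <= l <= L)%N ->
    forall n, (Nf l <= n)%N -> alpha l / 2 * n%:R <= (Cn l n)%:R}.
  apply: (@choice nat nat (fun l N => (1 <= l <= L)%N ->
    forall n, (N <= n)%N -> alpha l / 2 * n%:R <= (Cn l n)%:R)).
  move=> l; case: (boolP (1 <= l <= L)%N) => hl.
    have [a0 hc] := hgrowth l hl; have [N HN] := ev_ratio a0 hc.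
    by exists N.
  by exists 0%N => h; case/negP: hl.
pose N0 := (\max_(l < L.+1) Nf l + L + 1)%N.
apply: (@limn_esup_ev _ _ _ N0) => n hn.
have hnl : forall l, (1 <= l <= L)%N -> (Nf l <= n)%N.
  move=> l hl; have lL : (l < L.+1)%N by move: hl; lia.
  apply: leq_trans hn; rewrite /N0 -addnA.
  apply: leq_trans (leq_addr _ _); exact: (leq_bigmax (Ordinal lL)).
have hLn : (L < n)%N by move: hn; rewrite /N0; lia.
have n0 : (0 : R) < n%:R by rewrite ltr0n; move: hLn; lia.
have hsum : \sum_(j <- iota 1 L) delta (t j) (Cn j n * Dim j) <=
    L%:R * expR (- (eps + 1) * n%:R).
  rewrite big_seq.
  apply: (@le_trans _ _ (\sum_(j <- iota 1 L | j \in iota 1 L) expR (- (eps + 1) * n%:R))).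
    apply: ler_sum => j; rewrite mem_iota => hj.
    have hl : (1 <= j <= L)%N by move: hj; lia.
    have [a0 _] := hgrowth j hl.
    apply: (@delta_small R (t j) (r j) (alpha j) eps) => //.
    - exact: ltW.
    - by apply: hDim; move: hl; lia.
    - by rewrite /r lerDl.
    - exact: HNf (hnl j hl).
  by rewrite -big_seq big_const_seq count_predT size_iota iter_addr_0 mulr_natl.
have y0 : 0 < L%:R * expR (- (eps + 1) * n%:R) :> R.
  by rewrite mulr_gt0 ?expR_gt0 // ltr0n.
apply: le_trans (lee_wpmul2l _ (lne_le y0 (le_trans (Hexit n) _))) _.
- by rewrite lee_fin invr_ge0 ler0n.
- by rewrite lee_fin.
rewrite -EFinM lee_fin lnM ?posrE ?expR_gt0 ?ltr0n //.
rewrite expRK.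
have hlnL : ln (L%:R : R) <= n%:R.
  have := @le_ln1Dx R (L%:R - 1); rewrite (addrC 1) subrK => h.
  apply: le_trans (h _) _.
    by rewrite ltrBrDl subrr ltr0n; move: hL; lia.
  rewrite lerBlDr; apply: le_trans (_ : n%:R <= _); last by rewrite lerDl.
  by rewrite ler_nat ltnW.
rewrite mulrC ler_pdivrMr //.
nra.
Qed.
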